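(* Let $G$ be a finite group, $T$ a $G$-Tambara functor, and $I,J$ Tambara ideals of $T$. Then $\sqrt{IJ}=\sqrt I\cap\sqrt J$.
   Context: All rings are commutative with unit. A $G$-Tambara functor $T$ consists of commutative rings $T(G/H)$ for subgroups $H\le G$ with restriction ring maps, additive transfer maps, multiplicative norm maps and conjugation isomorphisms satisfying the standard Tambara axioms (Hill–Mazur). A Tambara ideal is a family of ring ideals $I(G/H)\subseteq T(G/H)$ closed under restriction, transfer, norm and conjugation; intersections are levelwise. $\langle x\rangle$ is the Tambara ideal generated by $x$. The product $IJ$ is the Tambara ideal generated by the levelwise products $I(G/H)\cdot J(G/H)$, $H\le G$. The radical $\sqrt I$ is the Tambara ideal with $\sqrt I(G/H)=\{x\in T(G/H)\mid \langle x\rangle^n\subseteq I\text{ for some }n\ge1\}$, $\langle x\rangle^n$ the $n$-fold product. *)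

(* Defs.v *)
(* Tambara functors in Tambara's original sense (functors on
   finite G-sets with restrictions, transfers and norms satisfying base change,
   the distributive (exponential) law and additivity); the subgroup levels
   T(G/H) are the values on the coset G-sets. *)
From HB Require Import structures.
From mathcomp Require Import all_boot all_order all_algebra all_fingroup.
Set Implicit Arguments. Unset Strict Implicit. Unset Printing Implicit Defensive.
Import GRing.Theory.
Local Open Scope ring_scope.

Section Tambara.
Variable gT : finGroupType.

Record gset := GSet {
  gcar :> finType;
  gact : gcar -> gT -> gcar;
  gact1 : forall x, gact x 1%g = x;
  gactM : forall x g h, gact x (g * h)%g = gact (gact x g) h }.

Record ghom (X Y : gset) := GHom {
  ghfun :> X -> Y;
  ghequi : forall x g, ghfun (gact x g) = gact (ghfun x) g }.

Record tdata := TData {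
  tamval : gset -> comPzRingType;
  tres : forall X Y : gset, ghom X Y -> tamval Y -> tamval X;
  ttr  : forall X Y : gset, ghom X Y -> tamval X -> tamval Y;
  tnm  : forall X Y : gset, ghom X Y -> tamval X -> tamval Y }.

Section TAx.
Variable D : tdata.
Local Notation T := (tamval D).
Local Notation R := (@tres D _ _).
Local Notation Tr := (@ttr D _ _).
Local Notation N := (@tnm D _ _).

Definition ax_ring :=
  forall (X Y : gset) (f : ghom X Y),
    (R f 1 = 1 /\ forall a b, R f (a + b) = R f a + R f b /\ R f (a * b) = R f a * R f b)
    /\ (forall a b, Tr f (a + b) = Tr f a + Tr f b)
    /\ (N f 1 = 1 /\ forall a b, N f (a * b) = N f a * N f b).

Definition ax_funct :=
  (forall (X : gset) (f : ghom X X), (forall x, f x = x) ->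
     forall a, R f a = a /\ Tr f a = a /\ N f a = a)
  /\ (forall (X Y Z : gset) (f : ghom X Y) (g : ghom Y Z) (h : ghom X Z),
       (forall x, h x = g (f x)) ->
       (forall a, R h a = R f (R g a)) /\
       (forall a, Tr h a = Tr g (Tr f a)) /\ (forall a, N h a = N g (N f a))).

(* the square  X' -f'-> Y' ; X' -g'-> X ; Y' -g-> Y ; X -f-> Y  is a pullback *)
Definition is_pullback (X Y X' Y' : gset) (f : ghom X Y) (g : ghom Y' Y)
    (f' : ghom X' Y') (g' : ghom X' X) :=
  (forall x', f (g' x') = g (f' x')) /\
  (forall x y', f x = g y' ->
     exists x', g' x' = x /\ f' x' = y' /\
       forall x'', g' x'' = x -> f' x'' = y' -> x'' = x').

Definition ax_basechange :=
  forall (X Y X' Y' : gset) (f : ghom X Y) (g : ghom Y' Y)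
    (f' : ghom X' Y') (g' : ghom X' X),
    is_pullback f g f' g' ->
    forall a, R g (Tr f a) = Tr f' (R g' a) /\ R g (N f a) = N f' (R g' a).

(* exponential diagram for A -p-> X -q-> Y:
     A <-e- X' -f-> Pi -r-> Y,  with X' -pi-> X,
   X' = X x_Y Pi, and Pi = the G-set of pairs (y, section of p over q^-1(y)). *)
Definition is_exponential (A X Y X' Pi : gset) (p : ghom A X) (q : ghom X Y)
    (e : ghom X' A) (pi : ghom X' X) (f : ghom X' Pi) (r : ghom Pi Y) :=
  (forall x', p (e x') = pi x') /\
  is_pullback q r f pi /\
  (forall (y : Y) (s : X -> option A),
     (forall x, q x = y -> exists a, s x = Some a /\ p a = x) ->
     exists z, r z = y /\ forall x', f x' = z -> s (pi x') = Some (e x')) /\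
  (forall z1 z2, r z1 = r z2 ->
     (forall x1 x2, f x1 = z1 -> f x2 = z2 -> pi x1 = pi x2 -> e x1 = e x2) ->
     z1 = z2).

Definition ax_distrib :=
  forall (A X Y X' Pi : gset) (p : ghom A X) (q : ghom X Y)
    (e : ghom X' A) (pi : ghom X' X) (f : ghom X' Pi) (r : ghom Pi Y),
    is_exponential p q e pi f r ->
    forall a, N q (Tr p a) = Tr r (N f (R e a)).

(* T(empty) = 0 and T(X + Y) = T(X) x T(Y) *)
Definition ax_additive :=
  (forall X : gset, #|X| = 0%N -> forall u v : T X, u = v) /\
  (forall (X Y Z : gset) (i : ghom X Z) (j : ghom Y Z),
     injective i -> injective j -> (forall x y, i x <> j y) ->
     (forall z, (exists x, i x = z) \/ (exists y, j y = z)) ->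
     forall a b, exists u, R i u = a /\ R j u = b /\
       forall v, R i v = a -> R j v = b -> v = u).

Definition is_tambara :=
  ax_ring /\ ax_funct /\ ax_basechange /\ ax_distrib /\ ax_additive.
End TAx.

Record tambara := Tambara { tdat :> tdata; tambaraP : is_tambara tdat }.

Section Cosets.
Local Open Scope group_scope.
Variable H : {group gT}.
Definition coset_t := {A : {set gT} | A \in rcosets H [set: gT]}.

Lemma coset_act_proof (A : coset_t) (g : gT) :
  (val A :* g) \in rcosets H [set: gT].
Proof.
case: A => A /= /rcosetsP [x _ ->]; apply/rcosetsP; exists (x * g)%g.
  by rewrite inE. by rewrite rcosetM.
Qed.

Definition coset_act (A : coset_t) (g : gT) : coset_t :=
  exist (fun B => B \in rcosets H [set: gT]) _ (coset_act_proof A g).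

Lemma coset_act1 A : coset_act A 1%g = A.
Proof. by apply: val_inj; rewrite /= mulg1. Qed.

Lemma coset_actM A g h : coset_act A (g * h)%g = coset_act (coset_act A g) h.
Proof. by apply: val_inj; rewrite /= rcosetM. Qed.

Definition cosGS : gset := GSet coset_act1 coset_actM.
End Cosets.

Section Proj.
Local Open Scope group_scope.
Variables H K : {group gT}.
Hypothesis sHK : H \subset K.

Lemma proj_proof (A : coset_t H) : (K * val A)%g \in rcosets K [set: gT].
Proof.
case: A => A /= /rcosetsP [x _ ->]; apply/rcosetsP; exists x; first by rewrite inE.
by rewrite mulgA mulGSid.
Qed.

Definition proj_fun (A : cosGS H) : cosGS K := exist (fun B => B \in rcosets K [set: gT]) _ (proj_proof A).

Lemma proj_equi A g : proj_fun (gact A g) = gact (proj_fun A) g.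
Proof. by apply: val_inj; rewrite /= mulgA. Qed.

Definition proj : ghom (cosGS H) (cosGS K) := GHom proj_equi.
End Proj.

(* conjugation G/H -> G/(H^g),  Hx |-> g^-1 H x = H^g (g^-1 x) *)
Section Conj.
Local Open Scope group_scope.
Variables (H : {group gT}) (g : gT).

Lemma conjm_proof (A : coset_t H) :
  (g^-1 *: val A)%g \in rcosets (H :^ g) [set: gT].
Proof.
case: A => A /= /rcosetsP [x _ ->]; apply/rcosetsP; exists (g^-1 * x)%g.
  by rewrite inE.
by rewrite conjsgE -!mulgA mulg_set1 mulKVg.
Qed.

Definition conjm_fun (A : cosGS H) : cosGS (H :^ g)%G :=
  exist (fun B => B \in rcosets (H :^ g) [set: gT]) _ (conjm_proof A).

Lemma conjm_equi A h : conjm_fun (gact A h) = gact (conjm_fun A) h.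
Proof. by apply: val_inj; rewrite /= mulgA. Qed.

Definition conjm : ghom (cosGS H) (cosGS (H :^ g)%G) := GHom conjm_equi.
End Conj.

Section Ideals.
Variable T : tambara.
Local Notation TT H := (tamval T (cosGS H)).

Definition tfam := forall H : {group gT}, TT H -> Prop.

Definition is_tideal (I : tfam) :=
  (forall H, I H 0) /\
  (forall H a b, I H a -> I H b -> I H (a + b)) /\
  (forall H (r a : TT H), I H a -> I H (r * a)) /\
  (forall (H K : {group gT}) (sHK : H \subset K) a, I K a -> I H (tres (proj sHK) a)) /\
  (forall (H K : {group gT}) (sHK : H \subset K) a, I H a -> I K (ttr (proj sHK) a)) /\
  (forall (H K : {group gT}) (sHK : H \subset K) a, I H a -> I K (tnm (proj sHK) a)) /\
  (forall (H : {group gT}) (g : gT) a, I H a -> I (H :^ g)%G (ttr (conjm H g) a)).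

Definition subfam (I J : tfam) := forall H x, I H x -> J H x.
Definition capI (I J : tfam) : tfam := fun H x => I H x /\ J H x.

Definition tgen (S : tfam) : tfam :=
  fun H y => forall J, is_tideal J -> subfam S J -> J H y.

Definition tprinc (H0 : {group gT}) (x : TT H0) : tfam :=
  fun H y => forall J, is_tideal J -> J H0 x -> J H y.

Definition tprod (I J : tfam) : tfam :=
  tgen (fun H z => exists a b, I H a /\ J H b /\ z = a * b).

(* n-fold product I^n (n >= 1): I^1 = I, I^(n+1) = I^n I *)
Fixpoint tpowS (I : tfam) (n : nat) : tfam :=
  match n with 0 => I | n'.+1 => tprod (tpowS I n') I end.
Definition tpow (I : tfam) (n : nat) : tfam := tpowS I n.-1.

Definition trad (I : tfam) : tfam :=
  fun H x => exists n, (1 <= n)%N /\ subfam (tpow (tprinc x) n) I.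
End Ideals.
End Tambara.

(* Main.v *)
Require Import Defs.
From HB Require Import structures.
From mathcomp Require Import all_boot all_order all_algebra all_fingroup.
Set Implicit Arguments. Unset Strict Implicit. Unset Printing Implicit Defensive.
Import GRing.Theory.
Local Open Scope ring_scope.

Section Work.
Variable gT : finGroupType.
Variable T : tambara gT.
Local Notation TV X := (@tamval gT T X).
Local Notation RR f := (@tres gT T _ _ f).
Local Notation TR f := (@ttr gT T _ _ f).
Local Notation NN f := (@tnm gT T _ _ f).
Local Notation gact := (@Defs.gact gT).
Local Notation gact1 := (@Defs.gact1 gT).
Local Notation gactM := (@Defs.gactM gT).

Lemma axR : ax_ring T. Proof. by case: (tambaraP T). Qed.
Lemma axF : ax_funct T. Proof. by case: (tambaraP T) => _ []. Qed.
Lemma axB : ax_basechange T. Proof. by case: (tambaraP T) => _ [_ []]. Qed.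
Lemma axD : ax_distrib T. Proof. by case: (tambaraP T) => _ [_ [_ []]]. Qed.
Lemma axA : ax_additive T. Proof. by case: (tambaraP T) => _ [_ [_ [_ ]]]. Qed.

Section Basic.
Variables (X Y : gset gT) (f : ghom X Y).
Lemma RD a b : RR f (a + b) = RR f a + RR f b. Proof. by have [[_ H] _] := axR f; case: (H a b). Qed.
Lemma RM a b : RR f (a * b) = RR f a * RR f b. Proof. by have [[_ H] _] := axR f; case: (H a b). Qed.
Lemma R1 : RR f 1 = 1. Proof. by have [[H _] _] := axR f. Qed.
Lemma TD a b : TR f (a + b) = TR f a + TR f b. Proof. by have [_ [H _]] := axR f. Qed.
Lemma NM a b : NN f (a * b) = NN f a * NN f b. Proof. by have [_ [_ [_ H]]] := axR f. Qed.
Lemma N1 : NN f 1 = 1. Proof. by have [_ [_ [H _]]] := axR f. Qed.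
Lemma R0 : RR f 0 = 0. Proof. by apply/(addrI (RR f 0)); rewrite -RD !addr0. Qed.
Lemma T0 : TR f 0 = 0. Proof. by apply/(addrI (TR f 0)); rewrite -TD !addr0. Qed.
End Basic.

Definition gcomp (X Y Z : gset gT) (f : ghom X Y) (g : ghom Y Z) : ghom X Z.
Proof. by exists (fun x => g (f x)) => x h; rewrite !ghequi. Defined.
Definition gid (X : gset gT) : ghom X X.
Proof. by exists (fun x => x). Defined.

Section Funct.
Variables (X Y Z : gset gT) (f : ghom X Y) (g : ghom Y Z) (h : ghom X Z).
Hypothesis hfg : forall x, h x = g (f x).
Lemma Rcomp a : RR h a = RR f (RR g a). Proof. by case: (axF) => _ H; case: (H _ _ _ f g h hfg). Qed.
Lemma Tcomp a : TR h a = TR g (TR f a). Proof. by case: (axF) => _ H; case: (H _ _ _ f g h hfg) => _ []. Qed.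
Lemma Ncomp a : NN h a = NN g (NN f a). Proof. by case: (axF) => _ H; case: (H _ _ _ f g h hfg) => _ []. Qed.
End Funct.

Section Id.
Variables (X : gset gT) (f : ghom X X).
Hypothesis hf : forall x, f x = x.
Lemma Rid a : RR f a = a. Proof. by case: (axF) => H _; case: (H _ f hf a). Qed.
Lemma Tid a : TR f a = a. Proof. by case: (axF) => H _; case: (H _ f hf a) => _ []. Qed.
Lemma Nid a : NN f a = a. Proof. by case: (axF) => H _; case: (H _ f hf a) => _ []. Qed.
End Id.

Section Ext.
Variables (X Y : gset gT) (f f' : ghom X Y).
Hypothesis hf : forall x, f x = f' x.
Lemma Rext a : RR f a = RR f' a.
Proof. by rewrite (Rcomp (g:=gid Y) hf) Rid. Qed.
Lemma Text a : TR f a = TR f' a.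
Proof. by rewrite (Tcomp (g:=gid Y) hf) Tid. Qed.
Lemma Next a : NN f a = NN f' a.
Proof. by rewrite (Ncomp (g:=gid Y) hf) Nid. Qed.
End Ext.

Definition emptyGS : gset gT.
Proof. by exists ('I_0 : finType) (fun x _ => x). Defined.


Definition from0 (A : Type) (x : 'I_0) : A. Proof. by case: x. Defined.
Definition gfrom0 (X : gset gT) : ghom emptyGS X.
Proof. by exists (@from0 X) => x; case: x. Defined.

Lemma empty_triv (u v : TV emptyGS) : u = v.
Proof. by case: axA => H _; apply: H; rewrite card_ord. Qed.

Section Inj.
Variables (U X : gset gT) (i : ghom U X).
Hypothesis inj_i : injective i.
Lemma pb_inj : is_pullback i i (gid U) (gid U).
Proof.
split; first by [].
move=> x y' H; have E := inj_i H; subst x.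
by exists y'; split; [|split].
Qed.
Lemma RT_inj b : RR i (TR i b) = b.
Proof. by case: (axB pb_inj b) => -> _; rewrite Tid // Rid. Qed.
Lemma RN_inj b : RR i (NN i b) = b.
Proof. by case: (axB pb_inj b) => _ ->; rewrite Nid // Rid. Qed.
End Inj.

Section Disj.
Variables (U V X : gset gT) (i : ghom U X) (j : ghom V X).
Hypothesis disj : forall u v, i u <> j v.
Lemma pb_disj : is_pullback j i (gfrom0 U) (gfrom0 V).
Proof. split; first by case. by move=> x y' /esym /disj. Qed.
Lemma RT_disj b : RR i (TR j b) = 0.
Proof. have [E _] := axB pb_disj b. by rewrite E (empty_triv (RR (gfrom0 V) b) 0) T0. Qed.
Lemma RN_disj b : RR i (NN j b) = 1.
Proof. have [_ E] := axB pb_disj b. by rewrite E (empty_triv (RR (gfrom0 V) b) 1) N1. Qed.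
End Disj.

Section Decomp.
Variables (U V X : gset gT) (i : ghom U X) (j : ghom V X).
Hypotheses (inj_i : injective i) (inj_j : injective j) (disj : forall u v, i u <> j v)
  (cover : forall x, (exists u, i u = x) \/ (exists v, j v = x)).
Lemma disj' v u : j v <> i u. Proof. by move=> /esym /disj. Qed.
Lemma add_uniq (a b : TV X) : RR i a = RR i b -> RR j a = RR j b -> a = b.
Proof.
case: axA => _ H; case: (H _ _ _ i j inj_i inj_j disj cover (RR i b) (RR j b)) => u [_ [_ Hu]].
by move=> h1 h2; rewrite (Hu a h1 h2) (Hu b).
Qed.
Lemma dec_T a : a = TR i (RR i a) + TR j (RR j a).
Proof.
apply: add_uniq; rewrite !RD.
  by rewrite RT_inj // RT_disj // addr0.
by rewrite RT_inj // RT_disj ?add0r //; apply: disj'.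
Qed.
Lemma dec_N a : a = NN i (RR i a) * NN j (RR j a).
Proof.
apply: add_uniq; rewrite !RM.
  by rewrite RN_inj // RN_disj // mulr1.
by rewrite RN_inj // RN_disj ?mul1r //; apply: disj'.
Qed.
End Decomp.

Definition prodbG (X : gset gT) : gset gT.
Proof.
refine (@GSet gT (X * bool)%type (fun xb g => (gact xb.1 g, xb.2)) _ _).
  by case=> x b /=; rewrite gact1.
by case=> x b g h /=; rewrite gactM.
Defined.
Definition itG (X : gset gT) : ghom X (prodbG X).
Proof. by refine (@GHom _ X (prodbG X) (fun x => (x, true)) _). Defined.
Definition ifG (X : gset gT) : ghom X (prodbG X).
Proof. by refine (@GHom _ X (prodbG X) (fun x => (x, false)) _). Defined.
Definition foldG (X : gset gT) : ghom (prodbG X) X.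
Proof. by refine (@GHom _ (prodbG X) X (fun xb => xb.1) _). Defined.

Lemma N_fold (X : gset gT) (u : TV (prodbG X)) :
  NN (foldG X) u = RR (itG X) u * RR (ifG X) u.
Proof.
rewrite {1}(@dec_N _ _ _ (itG X) (ifG X) _ _ _ _ u).
- rewrite NM -!(Ncomp (h := gid X)) //; by rewrite !Nid.
- by move=> x y [].
- by move=> x y [].
- by move=> x y.
- by case=> x []; [left; exists x | right; exists x].
Qed.

Definition sumG (X Y : gset gT) : gset gT.
Proof.
refine (@GSet gT (X + Y)%type
  (fun xy g => match xy with inl x => inl (gact x g) | inr y => inr (gact y g) end) _ _).
  by case=> x /=; rewrite gact1.
by case=> x g h /=; rewrite gactM.
Defined.
Definition inlG (X Y : gset gT) : ghom X (sumG X Y).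
Proof. by refine (@GHom _ X (sumG X Y) (fun x => inl x) _). Defined.
Definition inrG (X Y : gset gT) : ghom Y (sumG X Y).
Proof. by refine (@GHom _ Y (sumG X Y) (fun x => inr x) _). Defined.

Lemma glue (X Y : gset gT) (a : TV X) (b : TV Y) :
  exists u : TV (sumG X Y), RR (inlG X Y) u = a /\ RR (inrG X Y) u = b.
Proof.
case: axA => _ H.
have [] := H _ _ _ (inlG X Y) (inrG X Y) _ _ _ _ a b.
- by move=> x y [].
- by move=> x y [].
- by move=> x y.
- by case=> x; [left; exists x | right; exists x].
by move=> u [h1 [h2 _]]; exists u.
Qed.

Section Frob.
Variables (X' X : gset gT) (f : ghom X' X).
Definition frp : ghom (sumG X' X) (prodbG X).
Proof.
refine (@GHom _ (sumG X' X) (prodbG X) (fun a => match a with inl x' => (f x', true) | inr x => (x, false) end) _).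
by case=> x g //=; rewrite ghequi.
Defined.
Definition fre : ghom (prodbG X') (sumG X' X).
Proof.
refine (@GHom _ (prodbG X') (sumG X' X) (fun xb => if xb.2 then inl xb.1 else inr (f xb.1)) _).
by case=> x [] g //=; rewrite ghequi.
Defined.
Definition frpi : ghom (prodbG X') (prodbG X).
Proof.
refine (@GHom _ (prodbG X') (prodbG X) (fun xb => (f xb.1, xb.2)) _).
by case=> x b g //=; rewrite ghequi.
Defined.

Lemma fr_exp : is_exponential frp (foldG X) fre frpi (foldG X') f.
Proof.
split; first by case=> x [].
split.
  split; first by case.
  move=> [x b] x' /= E; exists (x', b); split; first by rewrite E.
  split=> // -[x'' b''] /= [E1 ->] ->; by [].
split.
  move=> y s Hs.
  have [a [sa pa]] := Hs (y, true) erefl.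
  case: a sa pa => [x' | x] sa pa; last by case: pa.
  case: pa => fx'.
  exists x'; split=> // -[z b] /= ->; case: b => /=; first by rewrite fx'.
  have [a' [sa' pa']] := Hs (y, false) erefl.
  case: a' sa' pa' => [z' | z'] sa' pa'; first by case: pa'.
  by case: pa' sa' => ->; rewrite fx'.
move=> z1 z2 /= E H.
have := H (z1, true) (z2, true) erefl erefl; rewrite /= E => /(_ erefl).
by case.
Qed.

Lemma pb_frt : is_pullback frp (itG X) f (inlG X' X).
Proof.
split=> //.
case=> [x' | x] y //= [E]; exists x'; split=> //; split=> //.
by move=> x'' [].
Qed.
Lemma pb_frf : is_pullback frp (ifG X) (gid X) (inrG X' X).
Proof.
split=> //.
case=> [x' | x] y //= [E]; exists x; split=> //; split=> //.
by move=> x'' [].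
Qed.

Lemma frobenius (y : TV X') (z : TV X) : TR f y * z = TR f (y * RR f z).
Proof.
have [w [wl wr]] := glue y z.
have E1 := axD fr_exp w.
rewrite N_fold (proj1 (axB pb_frt w)) (proj1 (axB pb_frf w)) (@Tid _ (gid X)) // wl wr in E1.
rewrite E1 N_fold -(Rcomp (h := inlG X' X)) // -(Rcomp (h := gcomp f (inrG X' X))) //.
by rewrite (Rcomp (h := gcomp f (inrG X' X)) (f := f) (g := inrG X' X)) // wl wr.
Qed.
End Frob.

Lemma gactK (X : gset gT) (x : X) g : gact (gact x g) g^-1 = x.
Proof. by rewrite -gactM mulgV gact1. Qed.
Lemma gactKV (X : gset gT) (x : X) g : gact (gact x g^-1) g = x.
Proof. by rewrite -gactM mulVg gact1. Qed.

Section PB.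
Variables (X Y Y' : gset gT) (f : ghom X Y) (g : ghom Y' Y).
Definition pbT := {w : (X * Y')%type | f w.1 == g w.2}.
Lemma pb_act_proof (w : pbT) h : f (gact (val w).1 h) == g (gact (val w).2 h).
Proof. by case: w => -[x y] /= /eqP E; rewrite !ghequi E. Qed.
Definition pbG : gset gT.
Proof.
refine (@GSet gT (pbT : finType) (fun w h => @exist _ (fun w => f w.1 == g w.2) (gact (val w).1 h, gact (val w).2 h) (pb_act_proof w h)) _ _).
  by move=> w; apply: val_inj; case: w => -[x y] /= _; rewrite !gact1.
by move=> w h k; apply: val_inj; case: w => -[x y] /= _; rewrite !gactM.
Defined.
Definition pb1 : ghom pbG X.
Proof. by refine (@GHom _ pbG X (fun w => (val w).1) _). Defined.
Definition pb2 : ghom pbG Y'.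
Proof. by refine (@GHom _ pbG Y' (fun w => (val w).2) _). Defined.
Lemma pb_is : is_pullback f g pb2 pb1.
Proof.
split; first by case=> -[x y] /= /eqP.
move=> x y E.
have P : f (x, y).1 == g (x, y).2 by apply/eqP.
exists (exist _ (x, y) P); split=> //; split=> //.
by case=> -[x' y'] P' /= E1 E2; apply: val_inj; rewrite /= E1 E2.
Qed.
End PB.

Lemma gact_eqV (X : gset gT) (u v : X) h : (gact u h^-1 == v) = (u == gact v h).
Proof. by apply/eqP/eqP => [<-|->]; rewrite ?gactKV ?gactK. Qed.

Section Exp.
Variables (A X Y : gset gT) (p : ghom A X) (q : ghom X Y).
Definition piP (zs : (Y * {ffun X -> option A})%type) : bool :=
  [forall x, if q x == zs.1 then (if zs.2 x is Some a then p a == x else false)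
             else zs.2 x == None].
Definition piT := {zs : (Y * {ffun X -> option A})%type | piP zs}.
Definition pi_actf (zs : (Y * {ffun X -> option A})%type) h :
   (Y * {ffun X -> option A})%type :=
  (gact zs.1 h, [ffun x => omap (fun a => gact a h) (zs.2 (gact x h^-1))]).
Lemma pi_act_proof (z : piT) h : piP (pi_actf (val z) h).
Proof.
case: z => -[y s] /= /forallP P; apply/forallP => x /=; rewrite ffunE.
have := P (gact x h^-1); rewrite /= ghequi gact_eqV.
case: (q x == gact y h) => //.
  by case: (s (gact x h^-1)) => // a /= /eqP E; rewrite ghequi E gactKV.
by move/eqP ->.
Qed.
Definition piG : gset gT.
Proof.
refine (@GSet gT (piT : finType) (fun z h => @exist _ piP (pi_actf (val z) h) (pi_act_proof z h)) _ _).
  move=> z; apply: val_inj; case: z => -[y s] /= _; rewrite /pi_actf /= gact1; congr (_, _).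
  by apply/ffunP => x; rewrite ffunE invg1 gact1; case: (s x) => //= a; rewrite gact1.
move=> z h k; apply: val_inj; case: z => -[y s] /= _; rewrite /pi_actf /= gactM; congr (_, _).
apply/ffunP => x; rewrite !ffunE invMg gactM.
by case: (s _) => //= a; rewrite gactM.
Defined.

Definition xpT := {w : (A * piG)%type | (val w.2).2 (p w.1) == Some w.1}.
Lemma xp_act_proof (w : xpT) h :
  (val (gact (val w).2 h)).2 (p (gact (val w).1 h)) == Some (gact (val w).1 h).
Proof.
case: w => -[a [[y s] P]] /= /eqP E; rewrite ffunE ghequi gactK E //=.
Qed.
Definition xpG : gset gT.
Proof.
refine (@GSet gT (xpT : finType)
  (fun w h => @exist _ (fun w : (A * piG)%type => (val w.2).2 (p w.1) == Some w.1)
     (gact (val w).1 h, gact (val w).2 h) (xp_act_proof w h)) _ _).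
  by move=> w; apply: val_inj; case: w => -[a z] /= _; congr (_, _); [exact: gact1 | exact: (gact1 z)].
by move=> w h k; apply: val_inj; case: w => -[a z] /= _; congr (_, _); [exact: gactM | exact: (gactM z)].
Defined.

Definition mkxp (a : A) (z : piG) (P : (val z).2 (p a) == Some a) : xpG :=
  @exist _ (fun w : (A * piG)%type => (val w.2).2 (p w.1) == Some w.1) (a, z) P.

Definition ex_e : ghom xpG A.
Proof. by refine (@GHom _ xpG A (fun w => (val w).1) _). Defined.
Definition ex_pi : ghom xpG X.
Proof. by refine (@GHom _ xpG X (fun w => p (val w).1) _) => w h /=; rewrite ghequi. Defined.
Definition ex_f : ghom xpG piG.
Proof. by refine (@GHom _ xpG piG (fun w => (val w).2) _). Defined.
Definition ex_r : ghom piG Y.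
Proof. by refine (@GHom _ piG Y (fun z => (val z).1) _). Defined.

Lemma piP_at (z : piG) x : q x = (val z).1 -> exists a, (val z).2 x = Some a /\ p a = x.
Proof.
case: z => -[y s] /= /forallP /(_ x) /= P E; move: P; rewrite E eqxx.
by case: (s x) => // a /eqP <-; exists a.
Qed.
Lemma piP_off (z : piG) x : q x <> (val z).1 -> (val z).2 x = None.
Proof.
case: z => -[y s] /= /forallP /(_ x) /= P E; move: P.
by case: eqP => // _ /eqP.
Qed.

Lemma ex_is : is_exponential p q ex_e ex_pi ex_f ex_r.
Proof.
split; first by [].
split.
  split.
    case=> -[a z] /= /eqP E; apply/eqP; apply: contraT => /eqP N.
    by rewrite piP_off in E.
  move=> x z /= E.
  have [a [sa pa]] := piP_at E.
  have P : (val (a, z).2).2 (p (a, z).1) == Some (a, z).1 by rewrite /= pa sa.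
  exists (exist _ (a, z) P); split=> //; split=> //.
  case=> -[a' z'] P' /= E1 E2; apply: val_inj => /=; rewrite E2 in P' *.
  by move: P'; rewrite E1 sa => /eqP [->].
split.
  move=> y s Hs.
  pose s' := [ffun x => if q x == y then s x else None].
  have P : piP (y, s').
    apply/forallP => x /=; rewrite ffunE; case: eqP => // /Hs [a [-> /eqP]] //.
  exists (exist _ (y, s') P); split=> //.
  case=> -[a z] /= P' Ez; move: P'; rewrite Ez /= ffunE.
  by case: (q (p a) == y) => // /eqP.
move=> z1 z2 E H; apply: val_inj.
case: z1 z2 E H => -[y1 s1] P1 [[y2 s2] P2] /= E H; subst y2; congr (_, _).
apply/ffunP => x.
case: (boolP (q x == y1)) => [/eqP Ex | /eqP Nx].
  have [a1 [sa1 pa1]] := @piP_at (exist _ (y1, s1) P1) x Ex.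
  have [a2 [sa2 pa2]] := @piP_at (exist _ (y1, s2) P2) x Ex.
  rewrite /= in sa1 sa2.
  have Q1 : (val (exist _ (y1, s1) P1 : piG)).2 (p a1) == Some a1 by rewrite /= pa1 sa1.
  have Q2 : (val (exist _ (y1, s2) P2 : piG)).2 (p a2) == Some a2 by rewrite /= pa2 sa2.
  have := H (mkxp Q1) (mkxp Q2) erefl erefl; rewrite /= pa1 pa2 => /(_ erefl) ea.
  by rewrite sa1 sa2 ea.
rewrite (@piP_off (exist _ (y1, s1) P1) x) //.
by rewrite (@piP_off (exist _ (y1, s2) P2) x).
Qed.

Lemma ex_f_surj : (forall y, exists x, q x = y) -> forall z, exists w, ex_f w = z.
Proof.
move=> qs z; have [x Ex] := qs (val z).1.
have [a [sa pa]] := piP_at Ex.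
have P : (val (a, z).2).2 (p (a, z).1) == Some (a, z).1 by rewrite /= pa sa.
by exists (exist _ (a, z) P).
Qed.
End Exp.

Section Iso.
Variables (X Y : gset gT) (phi : ghom X Y) (psi : ghom Y X).
Hypotheses (h1 : forall y, phi (psi y) = y) (h2 : forall x, psi (phi x) = x).
Lemma pb_iso : is_pullback phi (gid Y) (gid Y) psi.
Proof.
split; first by move=> y /=; rewrite h1.
move=> x y' /= E; exists y'; split; first by rewrite -E h2.
by split=> // x'' _ ->.
Qed.
Lemma iso_T a : TR phi a = RR psi a.
Proof. by have [E _] := axB pb_iso a; rewrite Rid // Tid // in E. Qed.
Lemma iso_N a : NN phi a = RR psi a.
Proof. by have [_ E] := axB pb_iso a; rewrite Rid // Nid // in E. Qed.
End Iso.

Local Open Scope group_scope.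
Lemma cosx_proof (L : {group gT}) (y : gT) : (L :* y) \in rcosets L [set: gT].
Proof. by apply/rcosetsP; exists y; rewrite ?inE. Qed.
Definition cosx (L : {group gT}) (y : gT) : cosGS L :=
  exist (fun B => B \in rcosets L [set: gT]) _ (cosx_proof L y).
Lemma cosx_act L y z : gact (cosx L y) z = cosx L (y * z).
Proof. by apply: val_inj; rewrite /= rcosetM. Qed.
Lemma cos_surj L (B : cosGS L) : exists y, B = cosx L y.
Proof.
case: B => A P; have := P; move/rcosetsP => [y _ E]; exists y; apply: val_inj; by rewrite /= E.
Qed.
Lemma cosx_eq L y z : (cosx L y = cosx L z) <-> (y * z^-1 \in L).
Proof.
split=> [E | P].
  have : L :* y = L :* z by move: E => /(congr1 val).
  by move/rcoset_eqP; rewrite mem_rcoset.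
by apply: val_inj => /=; apply/rcoset_eqP; rewrite mem_rcoset.
Qed.
Lemma cosx1 L y : cosx L y = gact (cosx L 1) y.
Proof. by rewrite cosx_act mul1g. Qed.
Lemma proj_cosx (H K : {group gT}) (sHK : H \subset K) z : proj sHK (cosx H z) = cosx K z.
Proof. by apply: val_inj; rewrite /= mulgA mulGSid. Qed.
Lemma proj_surj (H K : {group gT}) (sHK : H \subset K) (B : cosGS K) : exists B', proj sHK B' = B.
Proof. by have [z ->] := cos_surj B; exists (cosx H z); rewrite proj_cosx. Qed.

Lemma lmul_proof (K : {group gT}) y (B : coset_t (K :^ y)%G) : (y *: val B) \in rcosets K [set: gT].
Proof.
case: B => A /= /rcosetsP [z _ ->]; apply/rcosetsP; exists (y * z); rewrite ?inE //.
apply/setP => w; rewrite mem_lcoset !mem_rcoset mem_conjg conjgE invgK invMg.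
by rewrite !mulgA mulgV mul1g.
Qed.
Definition lmul_fun (K : {group gT}) y (B : cosGS (K :^ y)%G) : cosGS K :=
  exist (fun B => B \in rcosets K [set: gT]) _ (lmul_proof B).
Definition lmul (K : {group gT}) y : ghom (cosGS (K :^ y)%G) (cosGS K).
Proof. by refine (@GHom _ _ _ (@lmul_fun K y) _) => B h; apply: val_inj; rewrite /= mulgA. Defined.
Lemma lmul_conjm (K : {group gT}) y B : lmul K y (conjm K y B) = B.
Proof. by apply: val_inj; rewrite /= -lcosetM mulgV lcoset1. Qed.
Lemma conjm_lmul (K : {group gT}) y B : conjm K y (lmul K y B) = B.
Proof. by apply: val_inj; rewrite /= -lcosetM mulVg lcoset1. Qed.
Lemma lmul_cosx (K : {group gT}) y z : lmul K y (cosx (K :^ y)%G z) = cosx K (y * z).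
Proof.
apply: val_inj; apply/setP => w; rewrite /= mem_lcoset !mem_rcoset mem_conjg conjgE invgK invMg.
by rewrite !mulgA mulgV mul1g.
Qed.
Local Close Scope group_scope.

Section Ideal.
Unset Implicit Arguments.
Variable I : tfam T.
Set Implicit Arguments.
Hypothesis hI : is_tideal I.
Lemma id0 H : I H 0. Proof. by case: hI. Qed.
Lemma idD H a b : I H a -> I H b -> I H (a + b). Proof. by case: hI => _ [H1 _]; apply: H1. Qed.
Lemma idM H r a : I H a -> I H (r * a). Proof. by case: hI => _ [_ [H1 _]]; apply: H1. Qed.
Lemma idMr H r a : I H a -> I H (a * r). Proof. by rewrite mulrC; apply: idM. Qed.
Lemma idR (H K : {group gT}) (sHK : (H \subset K)%g) a : I K a -> I H (RR (proj sHK) a).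
Proof. by case: hI => _ [_ [_ [H1 _]]]; apply: H1. Qed.
Lemma idT (H K : {group gT}) (sHK : (H \subset K)%g) a : I H a -> I K (TR (proj sHK) a).
Proof. by case: hI => _ [_ [_ [_ [H1 _]]]]; apply: H1. Qed.
Lemma idN (H K : {group gT}) (sHK : (H \subset K)%g) a : I H a -> I K (NN (proj sHK) a).
Proof. by case: hI => _ [_ [_ [_ [_ [H1 _]]]]]; apply: H1. Qed.
Lemma idC H g a : I H a -> I (H :^ g)%G (TR (conjm H g) a).
Proof. by case: hI => _ [_ [_ [_ [_ [_ H1]]]]]; apply: H1. Qed.

Definition ext (X : gset gT) (a : TV X) :=
  forall (L : {group gT}) (g : ghom (cosGS L) X), I L (RR g a).

Lemma ext_R (X X' : gset gT) (k : ghom X' X) a : ext a -> ext (RR k a).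
Proof. by move=> Ea L g; rewrite -(Rcomp (h := gcomp g k)). Qed.
Lemma ext0 (X : gset gT) : ext (0 : TV X).
Proof. by move=> L g; rewrite R0; apply: id0. Qed.
Lemma extD (X : gset gT) (a b : TV X) : ext a -> ext b -> ext (a + b).
Proof. by move=> Ea Eb L g; rewrite RD; apply: idD. Qed.
Lemma extM (X : gset gT) (r a : TV X) : ext a -> ext (r * a).
Proof. by move=> Ea L g; rewrite RM; apply: idM. Qed.
Lemma extMr (X : gset gT) (r a : TV X) : ext a -> ext (a * r).
Proof. by move=> Ea L g; rewrite RM; apply: idMr. Qed.
Lemma ext_cos_inv K (a : TV (cosGS K)) : ext a -> I K a.
Proof. by move=> /(_ K (gid _)); rewrite Rid. Qed.

Lemma ext_cos K (a : TV (cosGS K)) : I K a -> ext a.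
Proof.
move=> Ia L g; have [y Ey] := cos_surj (g (cosx L 1)).
have sL : (L \subset (K :^ y)%G)%g.
  apply/subsetP => l Hl.
  have : cosx L l = cosx L 1 by apply/cosx_eq; rewrite invg1 mulg1.
  move/(congr1 g); rewrite {1}cosx1 ghequi Ey cosx_act => /cosx_eq.
  by rewrite /= mem_conjg conjgE invgK mulgA.
have E : forall B, g B = lmul K y (proj sL B).
  move=> B; have [z ->] := cos_surj B.
  by rewrite proj_cosx lmul_cosx cosx1 ghequi Ey cosx_act.
rewrite (Rcomp E) -(iso_T (@conjm_lmul K y) (@lmul_conjm K y)).
by apply: idR; apply: idC.
Qed.
End Ideal.

Section Sub.
Variables (X : gset gT) (P : pred X) (hP : forall x h, P x -> P (gact x h)).
Definition subG : gset gT.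
Proof.
refine (@GSet gT ({x : X | P x} : finType)
  (fun x h => exist (fun x => P x) (gact (val x) h) (hP h (valP x))) _ _).
  by move=> x; apply: val_inj; rewrite /= gact1.
by move=> x g h; apply: val_inj; rewrite /= gactM.
Defined.
Definition subI : ghom subG X.
Proof. by refine (@GHom _ subG X (fun x => val x) _). Defined.
Lemma subI_inj : injective subI. Proof. exact: val_inj. Qed.
Lemma card_subG (x0 : X) : ~~ P x0 -> (#|subG| < #|X|)%N.
Proof.
move=> Px0; rewrite /= card_sig -(cardC [pred x | P x]).
rewrite -[X in (X < _)%N]addn0 ltn_add2l; apply/card_gt0P; exists x0.
by rewrite !inE.
Qed.
End Sub.

Section Orbit.
Local Open Scope group_scope.
Variables (X : gset gT) (L : {group gT}) (f : ghom X (cosGS L)) (x1 : X).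
Hypothesis Hx1 : f x1 = cosx L 1.
Definition stabS : {set gT} := [set h | gact x1 h == x1].
Lemma stab_group : group_set stabS.
Proof.
apply/group_setP; split; first by rewrite inE gact1.
by move=> u v; rewrite !inE gactM => /eqP -> /eqP ->.
Qed.
Definition stabG : {group gT} := Group stab_group.
Lemma sML : stabG \subset L.
Proof.
apply/subsetP => h; rewrite inE => /eqP E.
have : f (gact x1 h) = f x1 by rewrite E.
rewrite ghequi Hx1 cosx_act mul1g => /cosx_eq.
by rewrite invg1 mulg1.
Qed.
Definition orb_fun (B : cosGS stabG) : X := gact x1 (repr (val B)).
Lemma orb_cosx z : orb_fun (cosx stabG z) = gact x1 z.
Proof.
rewrite /orb_fun /=; have := mem_repr_rcoset stabG z.
move: (repr _) => r; rewrite mem_rcoset inE => /eqP E.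
by rewrite -{1}(mulgKV z r) gactM E.
Qed.
Definition orbG : ghom (cosGS stabG) X.
Proof.
refine (@GHom _ _ _ orb_fun _) => B h.
by have [z ->] := cos_surj B; rewrite cosx_act !orb_cosx gactM.
Defined.
Lemma orb_inj : injective orbG.
Proof.
move=> B1 B2; have [z1 ->] := cos_surj B1; have [z2 ->] := cos_surj B2.
move=> E; have {}E : gact x1 z1 = gact x1 z2 by rewrite -!orb_cosx. apply/(cosx_eq stabG z1 z2); rewrite inE gactM E -gactM mulgV gact1.
by [].
Qed.
Lemma orb_f B : f (orbG B) = proj sML B.
Proof.
have [z ->] := cos_surj B; rewrite proj_cosx; change (f (orb_fun (cosx stabG z)) = cosx L z).
by rewrite orb_cosx ghequi Hx1 cosx_act mul1g.
Qed.
Definition orbP (v : X) : bool := [exists h, gact x1 h == v].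
Lemma norb_closed v h : ~~ orbP v -> ~~ orbP (gact v h).
Proof.
apply: contra => /existsP [k /eqP E]; apply/existsP; exists (k * h^-1).
by rewrite gactM E gactK.
Qed.
Definition compG := subG norb_closed.
Definition compI : ghom compG X := subI norb_closed.
Lemma orb_decomp_props :
  [/\ injective orbG, injective compI, (forall u v, orbG u <> compI v),
      (forall x, (exists u, orbG u = x) \/ (exists v, compI v = x)) &
      (#|compG| < #|X|)%N ].
Proof.
split.
- exact: orb_inj.
- exact: subI_inj.
- move=> u [v Pv] /= E; move: Pv; rewrite -E.
  have [z ->] := cos_surj u; rewrite /= orb_cosx.
  by move/existsP; apply; exists z.
- move=> x; case: (boolP (orbP x)) => [/existsP [z /eqP <-] | Px].
    by left; exists (cosx stabG z); rewrite /= orb_cosx.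
  by right; exists (exist _ x Px).
- have H1 : ~~ ~~ orbP x1 by rewrite negbK; apply/existsP; exists 1; rewrite gact1.
  exact: card_subG H1.
Qed.
End Orbit.

Lemma orbit_decomp (X : gset gT) (L : {group gT}) (f : ghom X (cosGS L)) (x0 : X) :
  exists (M : {group gT}) (sM : (M \subset L)%g) (i : ghom (cosGS M) X)
         (V : gset gT) (j : ghom V X),
  [/\ injective i, injective j, (forall u v, i u <> j v),
      (forall x, (exists u, i u = x) \/ (exists v, j v = x)) &
      (#|V| < #|X|)%N ] /\ forall B, f (i B) = proj sM B.
Proof.
have [y Ey] := cos_surj (f x0).
have Hx1 : f (gact x0 y^-1) = cosx L 1 by rewrite ghequi Ey cosx_act mulgV.
exists (stabG (gact x0 y^-1)), (sML Hx1), (orbG (gact x0 y^-1)), (compG (gact x0 y^-1)),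
  (compI (gact x0 y^-1)).
split; first exact: orb_decomp_props.
exact: orb_f.
Qed.

Section IdealD.
Unset Implicit Arguments.
Variable I : tfam T.
Set Implicit Arguments.
Hypothesis hI : is_tideal I.

Lemma D_tr n : forall (X : gset gT), (#|X| <= n)%N ->
  forall (L : {group gT}) (f : ghom X (cosGS L)) a, ext I a -> I L (TR f a).
Proof.
elim: n => [|n IH] X cX L f a Ea.
  have E : a = 0 by case: axA => H _; apply: H; apply/eqP; rewrite -leqn0.
  by rewrite E T0; apply: id0.
case: (pickP (@predT X)) => [x0 _ | H0].
  have [M [sM [i [V [j [[ii ij dj cv cV] fi]]]]]] := orbit_decomp f x0.
  rewrite (dec_T ii ij dj cv a) TD.
  rewrite -(Tcomp (h := proj sM)) // -(Tcomp (h := gcomp j f)) //.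
  apply: idD => //; first by apply: idT => //; apply: Ea.
  apply: IH; first by rewrite -ltnS (leq_trans cV).
  exact: ext_R.
have E : a = 0 by case: axA => H _; apply: H; apply: eq_card0.
by rewrite E T0; apply: id0.
Qed.

Lemma D_nm (X : gset gT) (L : {group gT}) (f : ghom X (cosGS L)) a (x0 : X) :
  ext I a -> I L (NN f a).
Proof.
move=> Ea.
have [M [sM [i [V [j [[ii ij dj cv cV] fi]]]]]] := orbit_decomp f x0.
rewrite (dec_N ii ij dj cv a) NM.
rewrite -(Ncomp (h := proj sM)) // -(Ncomp (h := gcomp j f)) //.
by apply: idMr => //; apply: idN => //; apply: Ea.
Qed.

Lemma ext_T (X Y : gset gT) (f : ghom X Y) a : ext I a -> ext I (TR f a).
Proof.
move=> Ea L g; have [E _] := axB (pb_is f g) a; rewrite E.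
by apply: (@D_tr #|pbG f g|) => //; apply: ext_R.
Qed.

Lemma ext_N (X Y : gset gT) (f : ghom X Y) a : (forall y, exists x, f x = y) ->
  ext I a -> ext I (NN f a).
Proof.
move=> fs Ea L g; have [_ E] := axB (pb_is f g) a; rewrite E.
have [x Ex] := fs (g (cosx L 1)).
have P : f (x, cosx L 1).1 == g (x, cosx L 1).2 by rewrite /= Ex.
apply: (@D_nm (pbG f g) L (pb2 f g) _ (exist _ (x, cosx L 1) P)); exact: ext_R.
Qed.
End IdealD.

Lemma tgen_ideal (S : tfam T) : is_tideal (tgen S).
Proof.
split; first by move=> H J hJ _; apply: id0.
split; first by move=> H a b Ha Hb J hJ hS; apply: idD => //; [apply: Ha | apply: Hb].
split; first by move=> H r a Ha J hJ hS; apply: idM => //; apply: Ha.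
split; first by move=> H K sHK a Ha J hJ hS; apply: idR => //; apply: Ha.
split; first by move=> H K sHK a Ha J hJ hS; apply: idT => //; apply: Ha.
split; first by move=> H K sHK a Ha J hJ hS; apply: idN => //; apply: Ha.
by move=> H g a Ha J hJ hS; apply: idC => //; apply: Ha.
Qed.
Lemma tgen_min (S J : tfam T) : is_tideal J -> subfam S J -> subfam (tgen S) J.
Proof. by move=> hJ hS H x /(_ J hJ hS). Qed.
Lemma tgen_sub (S : tfam T) : subfam S (tgen S).
Proof. by move=> H x Sx J hJ hS; apply: hS. Qed.

Lemma tprod_ideal (A B : tfam T) : is_tideal (tprod A B).
Proof. exact: tgen_ideal. Qed.
Lemma tprod_gen (A B : tfam T) (H : {group gT}) (a b : TV (cosGS H)) :
  A H a -> B H b -> tprod A B (a * b).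
Proof. by move=> Ha Hb; apply: tgen_sub; exists a, b. Qed.
Lemma tprod_min (A B J : tfam T) : is_tideal J ->
  (forall (H : {group gT}) (a b : TV (cosGS H)), A H a -> B H b -> J H (a * b)) ->
  subfam (tprod A B) J.
Proof. by move=> hJ hAB; apply: tgen_min => // H z [a [b [Ha [Hb ->]]]]; apply: hAB. Qed.
Lemma tprod_mono (A B A' B' : tfam T) : subfam A A' -> subfam B B' ->
  subfam (tprod A B) (tprod A' B').
Proof.
move=> sA sB; apply: tprod_min; first exact: tprod_ideal.
by move=> H a b Ha Hb; apply: tprod_gen; [apply: sA | apply: sB].
Qed.
Lemma tprod_subl (A B : tfam T) : is_tideal A -> subfam (tprod A B) A.
Proof. by move=> hA; apply: tprod_min => // H a b Ha _; apply: idMr. Qed.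
Lemma tprod_subr (A B : tfam T) : is_tideal B -> subfam (tprod A B) B.
Proof. by move=> hB; apply: tprod_min => // H a b _ Hb; apply: idM. Qed.

Definition gcase (X1 X2 Y : gset gT) (h1 : ghom X1 Y) (h2 : ghom X2 Y) : ghom (sumG X1 X2) Y.
Proof.
refine (@GHom _ (sumG X1 X2) Y (fun w => match w with inl x => h1 x | inr x => h2 x end) _).
by case=> x g /=; rewrite ghequi.
Defined.
Lemma sum_props (X1 X2 : gset gT) :
  [/\ injective (inlG X1 X2), injective (inrG X1 X2),
   (forall u v, inlG X1 X2 u <> inrG X1 X2 v) &
   (forall x, (exists u, inlG X1 X2 u = x) \/ (exists v, inrG X1 X2 v = x))].
Proof.
split.
- by move=> x y [].
- by move=> x y [].
- by move=> x y.
- by case=> x; [left; exists x | right; exists x].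
Qed.

Definition gpr1 (L : {group gT}) (X1 X2 : gset gT) (g : ghom (cosGS L) (sumG X1 X2)) (x0 : X1)
  (gl : forall B, g B = inl (match g B with inl x => x | inr _ => x0 end)) : ghom (cosGS L) X1.
Proof.
refine (@GHom _ _ X1 (fun B => match g B with inl x => x | inr _ => x0 end) _).
by move=> B h; rewrite ghequi (gl B).
Defined.
Definition gpr2 (L : {group gT}) (X1 X2 : gset gT) (g : ghom (cosGS L) (sumG X1 X2)) (y0 : X2)
  (gr : forall B, g B = inr (match g B with inr x => x | inl _ => y0 end)) : ghom (cosGS L) X2.
Proof.
refine (@GHom _ _ X2 (fun B => match g B with inr x => x | inl _ => y0 end) _).
by move=> B h; rewrite ghequi (gr B).
Defined.

Lemma ext_glue (I : tfam T) (X1 X2 : gset gT) (u : TV (sumG X1 X2)) :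
  ext I (RR (inlG X1 X2) u) -> ext I (RR (inrG X1 X2) u) -> ext I u.
Proof.
move=> E1 E2 L g.
have base : forall B, exists z, B = gact (cosx L 1) z.
  by move=> B; have [z ->] := cos_surj B; exists z; rewrite cosx1.
case E0 : (g (cosx L 1)) => [x0 | y0].
  have gl : forall B, g B = inl (match g B with inl x => x | inr _ => x0 end).
    by move=> B; have [z ->] := base B; rewrite ghequi E0.
  rewrite (Rcomp (f := gpr1 gl) (g := inlG X1 X2)); first exact: E1.
  by move=> B; rewrite /= -gl.
have gr : forall B, g B = inr (match g B with inr x => x | inl _ => y0 end).
  by move=> B; have [z ->] := base B; rewrite ghequi E0.
rewrite (Rcomp (f := gpr2 gr) (g := inrG X1 X2)); first exact: E2.
by move=> B; rewrite /= -gr.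
Qed.

Section SProd.
Unset Implicit Arguments.
Variables A B : tfam T.
Set Implicit Arguments.
Hypotheses (hA : is_tideal A) (hB : is_tideal B).

Definition Sfam : tfam T := fun K u => exists (X : gset gT) (h : ghom X (cosGS K)) (a b : TV X),
  ext A a /\ ext B b /\ u = TR h (a * b).

Lemma Sfam_ideal : is_tideal Sfam.
Proof.
split.
  move=> K; exists (cosGS K), (gid _), 0, 0; split; first exact: ext0.
  by split; [exact: ext0 | rewrite mulr0 T0].
split.
  move=> K u1 u2 [X1 [h1 [a1 [b1 [Ea1 [Eb1 ->]]]]]] [X2 [h2 [a2 [b2 [Ea2 [Eb2 ->]]]]]].
  have [ua [ua1 ua2]] := glue a1 a2.
  have [ub [ub1 ub2]] := glue b1 b2.
  exists (sumG X1 X2), (gcase h1 h2), ua, ub.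
  split; first by apply: ext_glue; rewrite ?ua1 ?ua2.
  split; first by apply: ext_glue; rewrite ?ub1 ?ub2.
  have [i1 i2 dj cv] := sum_props X1 X2.
  rewrite [in RHS](dec_T i1 i2 dj cv (ua * ub)) TD !RM ua1 ua2 ub1 ub2.
  by rewrite -(Tcomp (f := inlG X1 X2) (g := gcase h1 h2) (h := h1)) // -(Tcomp (f := inrG X1 X2) (g := gcase h1 h2) (h := h2)).
split.
  move=> K r u [X [h [a [b [Ea [Eb ->]]]]]].
  exists X, h, (a * RR h r), b; split; first exact: extMr.
  split=> //; by rewrite mulrC frobenius mulrAC.
split.
  move=> H K sHK u [X [h [a [b [Ea [Eb ->]]]]]].
  have [E _] := axB (pb_is h (proj sHK)) (a * b).
  exists (pbG h (proj sHK)), (pb2 h (proj sHK)), (RR (pb1 h (proj sHK)) a), (RR (pb1 h (proj sHK)) b).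
  split; first exact: ext_R.
  by split; [exact: ext_R | rewrite E RM].
split.
  move=> H K sHK u [X [h [a [b [Ea [Eb ->]]]]]].
  exists X, (gcomp h (proj sHK)), a, b; do 2 split => //.
  by rewrite (Tcomp (f := h) (g := proj sHK) (h := gcomp h (proj sHK))).
split.
  move=> H K sHK u [X [h [a [b [Ea [Eb ->]]]]]].
  have E := axD (ex_is h (proj sHK)) (a * b).
  have fs := ex_f_surj (proj_surj sHK).
  exists (piG h (proj sHK)), (ex_r h (proj sHK)),
    (NN (ex_f h (proj sHK)) (RR (ex_e h (proj sHK)) a)),
    (NN (ex_f h (proj sHK)) (RR (ex_e h (proj sHK)) b)).
  split; first by apply: ext_N => //; apply: ext_R.
  split; first by apply: ext_N => //; apply: ext_R.
  by rewrite E RM NM.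
move=> H g u [X [h [a [b [Ea [Eb ->]]]]]].
exists X, (gcomp h (conjm H g)), a, b; do 2 split => //.
by rewrite (Tcomp (f := h) (g := conjm H g) (h := gcomp h (conjm H g))).
Qed.

Lemma tprod_Sfam : subfam (tprod A B) Sfam.
Proof.
apply: tprod_min; first exact: Sfam_ideal.
move=> H a b Ha Hb; exists (cosGS H), (gid _), a, b.
split; first exact: ext_cos.
by split; [exact: ext_cos | rewrite Tid].
Qed.
End SProd.

Lemma tprod_assoc (A B C : tfam T) : is_tideal A -> is_tideal B -> is_tideal C ->
  subfam (tprod (tprod A B) C) (tprod A (tprod B C)).
Proof.
move=> hA hB hC; apply: tprod_min; first exact: tprod_ideal.
move=> H u c /(tprod_Sfam hA hB) [X [h [a [b [Ea [Eb ->]]]]]] Hc.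
rewrite frobenius -mulrA.
apply: (@D_tr _ (tprod_ideal A (tprod B C)) #|X|) => // L g.
rewrite !RM; apply: tprod_gen; first exact: Ea.
apply: tprod_gen; first exact: Eb.
rewrite -(Rcomp (h := gcomp g h)) //.
by apply: (ext_cos hC).
Qed.

Lemma capI_ideal (I J : tfam T) : is_tideal I -> is_tideal J -> is_tideal (capI I J).
Proof.
move=> hI hJ.
split; first by move=> H; split; apply: id0.
split; first by move=> H a b [Ia Ja] [Ib Jb]; split; apply: idD.
split; first by move=> H r a [Ia Ja]; split; apply: idM.
split; first by move=> H K sHK a [Ia Ja]; split; apply: idR.
split; first by move=> H K sHK a [Ia Ja]; split; apply: idT.
split; first by move=> H K sHK a [Ia Ja]; split; apply: idN.
by move=> H g a [Ia Ja]; split; apply: idC.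
Qed.

Lemma tprinc_ideal (H0 : {group gT}) (x : TV (cosGS H0)) : is_tideal (tprinc x).
Proof.
split; first by move=> H J hJ _; apply: id0.
split; first by move=> H a b Ha Hb J hJ hS; apply: idD => //; [apply: Ha | apply: Hb].
split; first by move=> H r a Ha J hJ hS; apply: idM => //; apply: Ha.
split; first by move=> H K sHK a Ha J hJ hS; apply: idR => //; apply: Ha.
split; first by move=> H K sHK a Ha J hJ hS; apply: idT => //; apply: Ha.
split; first by move=> H K sHK a Ha J hJ hS; apply: idN => //; apply: Ha.
by move=> H g a Ha J hJ hS; apply: idC => //; apply: Ha.
Qed.

Lemma tpowS_ideal (P : tfam T) : is_tideal P -> forall k, is_tideal (tpowS P k).
Proof. by move=> hP [|k] //=; apply: tprod_ideal. Qed.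

Lemma tpowS_mono (P : tfam T) : is_tideal P -> forall k l, (k <= l)%N ->
  subfam (tpowS P l) (tpowS P k).
Proof.
move=> hP k l /subnK <-; elim: (l - k)%N => [|d IH] //= H y Hy.
apply: IH; apply: (tprod_subl (tpowS_ideal hP _)); exact: Hy.
Qed.

Lemma main (I J : tfam T) : is_tideal I -> is_tideal J ->
  forall (H : {group gT}) (x : TV (cosGS H)),
    trad (tprod I J) x <-> capI (trad I) (trad J) x.
Proof.
move=> hI hJ H x; split.
  move=> [n [n1 Hs]]; split; exists n; split=> // K y /Hs.
    exact: tprod_subl.
  exact: tprod_subr.
move=> [[n [n1 Hn]] [m [m1 Hm]]].
set P := tprinc x.
have hP : is_tideal P by apply: tprinc_ideal.
set N := maxn n m.
set M := capI I J.
have hM : is_tideal M by apply: capI_ideal.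
have QM : subfam (tpowS P N.-1) M.
  move=> K y Hy; split.
    apply: Hn; apply: (tpowS_mono hP (k := n.-1) (l := N.-1)) => //.
    by rewrite -subn1 -[N.-1]subn1 leq_sub2r // leq_maxl.
  apply: Hm; apply: (tpowS_mono hP (k := m.-1) (l := N.-1)) => //.
  by rewrite -subn1 -[N.-1]subn1 leq_sub2r // leq_maxr.
have claim : forall j, subfam (tpowS P (N.-1 + j.+1)) (tprod M (tpowS P j)).
  elim=> [|j IH].
    rewrite addn1 /=; apply: tprod_mono => //.
  rewrite addnS /=.
  move=> K y Hy.
  apply: (tprod_assoc hM (tpowS_ideal hP j) hP).
  by apply: (tprod_mono IH (fun _ _ h => h)).
exists (N.-1 + N).+1; split=> //.
move=> K y Hy.
have Hy' : tpowS P (N.-1 + (N.-1).+1) y.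
  have -> : (N.-1).+1 = N by rewrite prednK // leq_max n1.
  exact: Hy.
have := claim _ _ _ Hy'.
apply: tprod_mono.
  by move=> K' z [].
by move=> K' z /QM [].
Qed.

End Work.

Theorem proposition4p29 (gT : finGroupType) (T : tambara gT)
    (I J : tfam T) :
  is_tideal I -> is_tideal J ->
  forall (H : {group gT}) (x : tamval T (cosGS H)),
    trad (tprod I J) x <-> capI (trad I) (trad J) x.
Proof. exact: main. Qed.
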